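(* Let $\mathbf{X}$ be a Polish space (regarded as a represented space via a Cauchy representation) that is $'$-overt. Then $\mathbf{X}$ is $K_\sigma$, i.e. a countable union of compact subsets.
   Context: A represented space is a pair $(X,\delta_X)$ with $\delta_X:\subseteq\mathbb{N}^\mathbb{N}\to X$ a partial surjection; $\mathcal{C}(\mathbf{X},\mathbf{Y})$ is the represented space of continuous maps. $\mathbb{S}=(\{\bot,\top\},\delta_\mathbb{S})$ with $\delta_\mathbb{S}(0^\mathbb{N})=\bot$, $\delta_\mathbb{S}(p)=\top$ otherwise. $\lim(p)(n)=\lim_{i\to\infty}p(\langle n,i\rangle)$; $\mathbb{S}'=(\{\bot,\top\},\delta_\mathbb{S}\circ\lim)$; $\mathcal{O}'(\mathbf{X})=\mathcal{C}(\mathbf{X},\mathbb{S}')$, elements identified with subsets of $X$. $\mathbf{X}$ is $'$-overt if $\operatorname{IsNonEmpty}:\mathcal{O}'(\mathbf{X})\to\mathbb{S}'$, $U\mapsto\top$ iff $U\neq\emptyset$, is computable, for a general Polish space understood relative to an oracle (i.e. continuous). *)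

(* Defs.v *)
From HB Require Import structures.
From mathcomp Require Import all_boot all_order all_algebra.
From mathcomp Require Import all_classical all_reals all_analysis.
Set Implicit Arguments. Unset Strict Implicit. Unset Printing Implicit Defensive.
Import Order.TTheory GRing.Theory Num.Theory.
Local Open Scope classical_set_scope.
Local Open Scope ring_scope.

Definition baire := nat -> nat.

Definition cpair (n i : nat) : nat := ((n + i) * (n + i).+1) %/ 2 + i.

Definition cont_on (D : set baire) (F : baire -> baire) : Prop :=
  forall p, D p -> forall n, exists m, forall p', D p' ->
    (forall i, (i < m)%N -> p' i = p i) -> F p' n = F p n.

(** Cauchy representation of a separable metric space w.r.t. the dense
    sequence a: p names x iff d(a_(p n), x) < 2^-n for all n. *)
Definition cauchy_name {R : realType} {X : pseudoMetricType R} (a : nat -> X)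
  (p : baire) (x : X) : Prop :=
  forall n, ball (a (p n)) ((2%:R ^+ n)^-1 : R) x.

(** The limit operation lim(r)(n) = lim_i r(<n,i>) (as a relation). *)
Definition lim_rel (r s : baire) : Prop :=
  forall n, exists i0, forall i, (i0 <= i)%N -> r (cpair n i) = s n.

(** Representation of Sierpinski space S: 0^N names bot, everything else top.
    Truth values are Props (top = True).  S' = (S, delta_S o lim). *)
Definition S'_name (r : baire) (P : Prop) : Prop :=
  exists s, lim_rel r s /\ (P <-> exists n, s n <> 0%N).

(** Standard representation of continuous partial functions on Baire space
    via Kleene associates: eta_q(p)(n) = k iff q(code(n, p|m)) = k+1 for the
    least m with q(code(n, p|m)) <> 0. *)
Definition assoc_out (q p : baire) (n k : nat) : Prop :=
  exists m, q (pickle (n, mkseq p m)) = k.+1 /\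
    forall m', (m' < m)%N -> q (pickle (n, mkseq p m')) = 0%N.

(** Function-space representation of O'(X) = C(X, S'), elements identified
    with subsets U of X (U = f^-1(top)): q names U iff eta_q realizes the map
    x |-> (x \in U) : X -> S'. *)
Definition O'_name {R : realType} {X : pseudoMetricType R} (a : nat -> X)
  (q : baire) (U : set X) : Prop :=
  forall p x, cauchy_name a p x ->
    exists r, (forall n, assoc_out q p n (r n)) /\ S'_name r (U x).

(** X is '-overt: IsNonEmpty : O'(X) -> S' has a continuous realizer
    (i.e. is computable relative to some oracle). *)
Definition prime_overt {R : realType} {X : pseudoMetricType R} (a : nat -> X)
  : Prop :=
  exists F : baire -> baire,
    cont_on [set q | exists U, O'_name a q U] F /\
    forall q U, O'_name a q U -> S'_name (F q) (U !=set0).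

Definition K_sigma {T : topologicalType} : Prop :=
  exists K : nat -> set T, (forall n, compact (K n)) /\ \bigcup_n K n = setT.

(* Main.v *)
Require Import Defs.
From HB Require Import structures.
From mathcomp Require Import all_boot all_order all_algebra.
From mathcomp Require Import all_classical all_reals all_analysis.
From mathcomp Require Import ring lra.
Import Order.TTheory GRing.Theory Num.Theory.
Local Open Scope classical_set_scope.
Local Open Scope ring_scope.
Section Rad.
Context {R : realType}.
Definition rad (k : nat) : R := (2%:R ^+ k)^-1.
Lemma rad_gt0 k : 0 < rad k.
Proof. by rewrite /rad invr_gt0 exprn_gt0 // ltr0n. Qed.
Lemma radS k : rad k.+1 + rad k.+1 = rad k.
Proof.
rewrite /rad exprS; have h : (2%:R ^+ k : R) != 0 by apply: expf_neq0; rewrite pnatr_eq0.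
by field; rewrite h.
Qed.
Lemma rad_small {d : R} : 0 < d -> exists k, rad k < d.
Proof.
move=> d0; have di : 0 <= d^-1 by rewrite invr_ge0 ltW.
have := archi_boundP di.
set n := Num.Def.archi_bound _ => hn.
exists n; rewrite /rad -(invrK d) ltf_pV2 ?posrE ?exprn_gt0 ?ltr0n ?invr_gt0 //.
apply: (lt_le_trans hn); rewrite -natrX ler_nat; apply: ltnW; exact: ltn_expl.
Qed.
Lemma rad_le k l : (k <= l)%N -> rad l <= rad k.
Proof.
move=> kl; rewrite /rad lef_pV2 ?posrE ?exprn_gt0 ?ltr0n //.
by rewrite ler_eXn2l // ltr1n.
Qed.
End Rad.
Section Names.
Context {R : realType} {X : pseudoMetricType R} (a : nat -> X).
Definition Bl (e : nat * nat) : set X := ball (a e.1) (rad e.2).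
Definition Rem (e : nat * nat) : set X :=
  [set x | exists2 r : R, 0 < r & ball x r `<=` Bl e].
Definition Wp (E : nat -> nat * nat) (p : baire) (c : nat) : Prop :=
  exists j m, (j <= c)%N /\ (m <= c)%N /\
    ball (a (p m)) (rad m + rad m) `<=` Bl (E j).
Definition Wl (E : nat -> nat * nat) (l : seq nat) (c : nat) : Prop :=
  exists j m, (j <= c)%N /\ (m <= c)%N /\
    ball (a (nth 0%N l m)) (rad m + rad m) `<=` Bl (E j).
Definition qE (E : nat -> nat * nat) : baire := fun code =>
  match (unpickle code : option (nat * seq nat)) with
  | Some (c, l) => if size l == c.+1 then (if `[< Wl E l c >] then 1%N else 2%N) else 0%N
  | None => 0%N end.
Definition AE (E : nat -> nat * nat) : set X := [set x | forall j, ~ Rem (E j) x].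

Lemma Wl_mk E p c : Wl E (mkseq p c.+1) c <-> Wp E p c.
Proof.
split=> -[j [m [jc [mc H]]]]; exists j, m; do 2 split => //;
  by rewrite nth_mkseq // in H *; rewrite ltnS.
Qed.

Lemma Wp_mono E p c c' : Wp E p c -> (c <= c')%N -> Wp E p c'.
Proof.
move=> [j [m [jc [mc H]]]] cc; exists j, m; split; last split => //.
  exact: leq_trans cc. exact: leq_trans cc.
Qed.

Lemma Wp_Rem E p x c : cauchy_name a p x -> Wp E p c -> exists j, Rem (E j) x.
Proof.
move=> hp [j [m [_ [_ H]]]]; exists j, (rad m); first exact: rad_gt0.
move=> w hw; apply: H; exact: (ball_triangle (hp m) hw).
Qed.

Lemma Rem_Wp E p x j : cauchy_name a p x -> Rem (E j) x -> exists c, Wp E p c.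
Proof.
move=> hp [r r0 H].
have r3 : 0 < r / 3%:R by rewrite divr_gt0 // ltr0n.
have [m hm] := rad_small r3.
exists (maxn j m), j, m; split; first exact: leq_maxl.
split; first exact: leq_maxr.
move=> w hw; apply: H; have := ball_triangle (ball_sym (hp m)) hw.
apply: le_ball; move: (@rad_gt0 R m); rewrite /rad in hm * => ?; lra.
Qed.
End Names.
Section Names2.
Context {R : realType} {X : pseudoMetricType R} (a : nat -> X).

Lemma cpair_ge n i : (i <= cpair n i)%N.
Proof. by rewrite /cpair leq_addl. Qed.

Lemma qE_name E : O'_name a (qE a E) (AE a E).
Proof.
move=> p x hp.
exists (fun c => if `[< Wp a E p c >] then 0%N else 1%N); split.
  move=> c; exists c.+1; split.
    rewrite /qE pickleK size_mkseq eqxx (asbool_equiv_eq (Wl_mk a E p c)).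
    by case: ifP.
  move=> m' hm'; rewrite /qE pickleK size_mkseq.
  by case: eqP => // e; rewrite e ltnn in hm'.
exists (fun _ => if `[< exists c, Wp a E p c >] then 0%N else 1%N); split.
  move=> n; case: (pselect (exists c, Wp a E p c)) => [[c0 hc0]|nW].
    exists c0 => i hi.
    have hW : Wp a E p (cpair n i) by apply: Wp_mono hc0 (leq_trans hi (cpair_ge n i)).
    by rewrite !asboolT //; exists c0.
  exists 0%N => i _; rewrite !asboolF //.
  by move=> hW; apply: nW; exists (cpair n i).
split.
  move=> hA; exists 0%N; rewrite asboolF //.
  move=> [c hc]; have [j hj] := @Wp_Rem _ _ a _ _ _ _ hp hc; exact: hA j hj.
move=> [n]; case: asboolP => // nW _ j hj; apply: nW; exact: @Rem_Wp _ _ a _ _ _ _ hp hj.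
Qed.

Definition Kb (M : nat) : nat :=
  (\max_(i < M) match (unpickle (val i) : option (nat * seq nat)) with
               | Some (c, _) => c.+1 | None => 0%N end)%N.

Lemma qE_agree E1 E2 M : (forall j, (j < Kb M)%N -> E1 j = E2 j) ->
  forall i, (i < M)%N -> qE a E1 i = qE a E2 i.
Proof.
move=> h i iM; rewrite /qE.
have hK := @leq_bigmax _ (fun i : 'I_M => match (unpickle (val i) : option (nat * seq nat)) with
               | Some (c, _) => c.+1 | None => 0%N end) (Ordinal iM).
rewrite -/(Kb M) /= in hK.
case hu: (unpickle i) hK => [[c l]|] // hK.
rewrite (@asbool_equiv_eq (Wl a E1 l c) (Wl a E2 l c)) //.
have e : forall j, (j <= c)%N -> E1 j = E2 j.
  by move=> j jc; apply: h; apply: leq_trans hK.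
split=> -[j [m [jc [mc H]]]]; exists j, m; do 2 split => //.
  by rewrite -e. by rewrite e.
Qed.
End Names2.
Section Geom.
Context {R : realType} {X : completePseudoMetricType R} (a : nat -> X)
  (Ha : dense (range a)).

Lemma dense_ball (x : X) (e : R) : 0 < e -> exists j, ball x e (a j).
Proof.
move=> e0; have [y [yi [j _ ej]]] : (ball x e)° `&` range a !=set0.
  by apply: Ha; [exists x; exact: nbhsx_ballx|exact: open_interior].
by exists j; rewrite ej; exact: interior_subset.
Qed.

Definition good (S : set X) := exists K : nat -> set X,
  (forall n, compact (K n)) /\ S `<=` \bigcup_n K n.

Lemma goodU (I : countType) (S : I -> set X) :
  (forall i, good (S i)) -> good (\bigcup_i S i).
Proof.
move=> h; have [K hK] := choice h.
exists (fun n => match (unpickle n : option (I * nat)) with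
                 | Some (i, m) => K i m | None => set0 end); split.
  by move=> n; case: unpickle => [[i m]|]; [exact: (hK i).1|exact: compact0].
move=> x [i _ Sx]; have [m _ Kx] := (hK i).2 x Sx.
by exists (pickle (i, m)) => //; rewrite pickleK.
Qed.

Lemma good_sub (S T : set X) : S `<=` T -> good T -> good S.
Proof. by move=> ST [K [hK TK]]; exists K; split => // x /ST /TK. Qed.

Lemma good_compact (C : set X) : compact C -> good C.
Proof. by move=> hC; exists (fun _ => C); split => // x Cx; exists 0%N. Qed.

Lemma goodU2 (S T : set X) : good S -> good T -> good (S `|` T).
Proof.
move=> hS hT; apply: (good_sub _ (\bigcup_(b : bool) (if b then S else T))).
  by move=> x [Sx|Tx]; [exists true|exists false].
by apply: goodU => -[].
Qed.

Definition Zb : set X := [set x | forall e, 0 < e -> ~ good (ball x e)].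
Definition Gs : set X :=
  \bigcup_(p : nat * nat) (if `[< good (Bl a p) >] then Bl a p else set0).

Lemma good_Gs : good Gs.
Proof.
apply: goodU => p; case: asboolP => // _.
by apply: good_compact; exact: compact0.
Qed.

Lemma notZ_Gs x : ~ Zb x -> Gs x.
Proof.
move=> hx; apply: contrapT => nG; apply: hx => e e0 ge.
have e2 : 0 < e / 2%:R by rewrite divr_gt0 // ltr0n.
have [k hk] := rad_small e2.
have [j hj] := dense_ball x _ (@rad_gt0 R k).
have sub : Bl a (j, k) `<=` ball x e.
  move=> w hw; have := ball_triangle hj hw; apply: le_ball.
  by rewrite /= in hk; lra.
apply: nG; exists (j, k) => //; rewrite asboolT; last exact: good_sub ge.
exact: ball_sym hj.
Qed.

Lemma Z_empty_K : (forall x, ~ Zb x) -> @K_sigma X.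
Proof.
move=> h; have [K [hK GK]] := good_Gs; exists K; split => //.
by apply/seteqP; split => // x _; apply: GK; apply: notZ_Gs.
Qed.

Lemma ultra_fin (F : set_system X) (UF : UltraFilter F) n (B : nat -> set X) :
  F [set x | exists2 i, (i < n)%N & B i x] -> exists i, (i < n)%N /\ F (B i).
Proof.
elim: n => [|n IH] hF.
  by have [x [i]] := filter_ex hF.
have [FB|FnB] := in_ultra_setVsetC (B n) UF; first by exists n.
have [i [ilt Fi]] : exists i, (i < n)%N /\ F (B i).
  apply: IH; apply: filterS (filterI hF FnB) => x [[i ilt Bi] nB].
  exists i => //; rewrite ltnS leq_eqVlt in ilt; case/orP: ilt => // /eqP ei.
  by rewrite ei in Bi.
by exists i; split => //; apply: ltnW.
Qed.

Lemma tb_compact (A : set X) :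
  (forall e, 0 < e -> exists n (c : nat -> X),
     A `<=` [set x | exists2 i, (i < n)%N & ball (c i) e x]) ->
  compact (closure A).
Proof.
move=> h; rewrite compact_ultra => F UF FA.
have Fc : cauchy_ex F.
  move=> e e0; have e2 : 0 < e / 2%:R by rewrite divr_gt0 // ltr0n.
  have [n [c hc]] := h _ e2.
  have : F [set x | exists2 i, (i < n)%N & ball (c i) e x].
    apply: filterS FA => w hw.
    have [y [Ay yw]] := hw _ (nbhsx_ballx w _ e2).
    have [i ilt ci] := hc y Ay; exists i => //.
    have := ball_triangle ci (ball_sym yw); apply: le_ball; lra.
  by move=> /(@ultra_fin F UF) [i [_ Fi]]; exists (c i).
have cF : cvg F by apply: cauchy_cvg; apply: cauchy_exP.
exists (lim F); split => //.
have : cluster F (lim F) by rewrite ultra_cvg_clusterE.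
rewrite clusterE => /(_ _ FA).
by rewrite -(proj1 (closure_id _) (@closed_closure _ A)).
Qed.

Lemma Zb_spread y r : Zb y -> 0 < r -> exists2 e, 0 < e &
  forall n (c : nat -> X), exists z,
    [/\ Zb z, ball y r z & forall i, (i < n)%N -> ~ ball (c i) e z].
Proof.
move=> hy r0; apply: contrapT => H.
set A := Zb `&` ball y r.
have tb : forall e, 0 < e -> exists n (c : nat -> X),
     A `<=` [set x | exists2 i, (i < n)%N & ball (c i) e x].
  move=> e e0; apply: contrapT => nc; apply: H; exists e => // n c.
  apply: contrapT => nz; apply: nc; exists n, c => z [Zz yz].
  apply: contrapT => nz'; apply: nz; exists z; split => // i ilt bc.
  by apply: nz'; exists i.
apply: (hy r r0); apply: (good_sub _ (closure A `|` Gs)).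
  move=> z yz; case: (pselect (Zb z)) => hz.
    by left; apply: subset_closure.
  by right; apply: notZ_Gs.
apply: goodU2; last exact: good_Gs.
by apply: good_compact; apply: tb_compact.
Qed.
End Geom.
Section Main.
Context {R : realType} {X : completePseudoMetricType R} (a : nat -> X)
  (Ha : dense (range a)) (F : baire -> baire)
  (Fc : cont_on [set q | exists U, O'_name a q U] F)
  (Fok : forall q U, O'_name a q U -> S'_name (F q) (U !=set0)).

Let D := [set q | exists U, O'_name a q U].

Lemma cover_empty E N k x :
  ~ AE a (fun i => if (i < N)%N then E i else ((i - N)%N, k)) x.
Proof.
move=> hA; have [j hj] := dense_ball a Ha x _ (@rad_gt0 R k.+1).
apply: (hA (N + j)%N); rewrite ltnNge leq_addr /= addKn.
exists (rad k.+1); first exact: rad_gt0.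
move=> w hw; rewrite /Bl /= -radS; exact: ball_triangle (ball_sym hj) hw.
Qed.

Lemma zeros_after q U : O'_name a q U -> (forall x, ~ U x) ->
  forall n b, exists i, (b <= i)%N /\ F q (cpair n i) = 0%N.
Proof.
move=> hq hU n b; have [s [hl hs]] := Fok _ _ hq.
have [i0 hi0] := hl n; exists (maxn b i0); split; first exact: leq_maxl.
rewrite hi0 ?leq_maxr //; case: (s n =P 0%N) => // sn.
have [x Ux] : U !=set0 by apply/hs; exists n.
by have := hU x Ux.
Qed.

Lemma collect q U : O'_name a q U -> (forall x, ~ U x) -> forall t b,
  exists M, forall n, (n <= t)%N -> exists i, (b <= i)%N /\
    forall q', D q' -> (forall c, (c < M)%N -> q' c = q c) -> F q' (cpair n i) = 0%N.
Proof.
move=> hq hU t b.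
have main : forall n, exists m i, (b <= i)%N /\
    forall q', D q' -> (forall c, (c < m)%N -> q' c = q c) -> F q' (cpair n i) = 0%N.
  move=> n; have [i [bi Fi]] := zeros_after _ _ hq hU n b.
  have [m hm] := Fc q (ex_intro _ U hq) (cpair n i).
  by exists m, i; split => // q' Dq' ag; rewrite hm // Fi.
elim: t => [|t [M hM]].
  have [m [i [bi hi]]] := main 0%N; exists m => n; rewrite leqn0 => /eqP ->.
  by exists i.
have [m [i [bi hi]]] := main t.+1; exists (maxn M m) => n.
rewrite leq_eqVlt => /orP [/eqP ->|nt].
  exists i; split => // q' Dq' ag; apply: hi => // c cm.
  by apply: ag; apply: leq_trans cm (leq_maxr _ _).
have [i' [bi' hi']] := hM n nt; exists i'; split => // q' Dq' ag.
by apply: hi' => // c cM; apply: ag; apply: leq_trans cM (leq_maxl _ _).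
Qed.

Record st := St { sE : nat -> nat * nat; sN : nat; sy : X; sr : R }.

Definition Inv (s : st) : Prop := [/\ Zb (sy s), 0 < sr s &
  forall j, (j < sN s)%N -> forall w, ball (sy s) (sr s) w -> ~ Bl a (sE s j) w].

Definition Rel (t : nat) (s s' : st) : Prop := [/\ (sN s < sN s')%N,
  (forall j, (j < sN s)%N -> sE s' j = sE s j), sr s' <= rad t,
  (forall w, ball (sy s') (sr s' + sr s') w -> ball (sy s) (sr s) w) &
  forall E'', (forall j, (j < sN s')%N -> E'' j = sE s' j) ->
    forall n, (n <= t)%N -> exists i, (t <= i)%N /\ F (qE a E'') (cpair n i) = 0%N].

Lemma step t s : Inv s -> exists s', Inv s' /\ Rel t s s'.
Proof.
case: s => E N y r [/= Zy r0 hinv].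
have r2 : 0 < r / 2%:R by rewrite divr_gt0 // ltr0n.
have [e e0 he] := @Zb_spread _ _ a Ha _ _ Zy r2.
have e2 : 0 < e / 2%:R by rewrite divr_gt0 // ltr0n.
have [k hk] := rad_small e2.
pose E' := fun i => if (i < N)%N then E i else ((i - N)%N, k).
have hq := qE_name a E'.
have [M hM] := collect _ _ hq (cover_empty E N k) t t.
pose N' := maxn N.+1 (Kb M).
have [z [Zz yz hz]] := he (N' - N)%N a.
have tr0 := @rad_gt0 R t.
pose r' := Num.min (r / 4%:R) (Num.min (e / 2%:R) (rad t)).
have r'0 : 0 < r' by rewrite !lt_min tr0 e2 andbT divr_gt0 // ltr0n.
have r'1 : r' <= r / 4%:R by rewrite ge_min lexx.
have r'2 : r' <= e / 2%:R by rewrite !ge_min lexx orbT.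
have r'3 : r' <= rad t by rewrite !ge_min lexx !orbT.
have zy : forall w, ball z (r' + r') w -> ball y r w.
  move=> w hw; have := ball_triangle yz hw; apply: le_ball; lra.
exists (St E' N' z r'); split; split => //=.
- move=> j jN w hw; rewrite /E'; case: ifP => jlt.
    move=> hb; apply: (hinv j jlt w _ hb); apply: zy; apply: le_ball hw; lra.
  move=> hb; apply: (hz (j - N)%N).
    by apply: ltn_sub2r; [apply: leq_trans (leq_maxl _ _)|]; rewrite // ltnNge jlt.
  have := ball_triangle hb (ball_sym hw); apply: le_ball.
  by rewrite /= in hk; lra.
- exact: leq_trans (leq_maxl _ _).
- by move=> j jN; rewrite /E' jN.
- move=> E'' ag n nt; have [i [ti hi]] := hM n nt; exists i; split => //.
  apply: hi; first by exists (AE a E''); exact: qE_name.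
  apply: qE_agree => j jK; apply: ag; apply: leq_trans jK (leq_maxr _ _).
Qed.
End Main.
Theorem lemma39 (R : realType) (X : completePseudoMetricType R)
  (HX : hausdorff_space X)
  (a : nat -> X) (Ha : dense (range a)) :
  prime_overt a -> @K_sigma X.
Proof.
move=> [F [Fc Fok]].
case: (pselect (exists y : X, Zb y)) => [[y0 Zy0]|nZ]; last first.
  by apply: (Z_empty_K a Ha) => x Zx; apply: nZ; exists x.
have step' : forall ts : nat * (@st R X), exists s' : @st R X,
    Inv a ts.2 -> Inv a s' /\ Rel a F ts.1 ts.2 s'.
  move=> [t s]; case: (pselect (Inv a s)) => hs.
    by have [s' hs'] := step a Ha F Fc Fok t s hs; exists s'.
  by exists s.
have [g hg] := choice step'.
pose S := fix f (n : nat) : @st R X :=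
  if n is m.+1 then g (m, f m) else St (fun _ => (0%N, 0%N)) 0%N y0 1.
have HI : forall n, Inv a (S n) /\ Rel a F n (S n) (S n.+1).
  elim=> [|n [In Rn]].
    have I0 : Inv a (S 0%N).
      by rewrite /Inv /=; split; [exact: Zy0|exact: ltr01|move=> j; rewrite ltn0].
    by split => //; exact: (hg (0%N, S 0%N) I0).2.
  have I1 : Inv a (S n.+1) := (hg (n, S n) In).1.
  by split => //; exact: (hg (n.+1, S n.+1) I1).2.
have Nlt : forall n, (sN (S n) < sN (S n.+1))%N by move=> n; have [h _ _ _ _] := (HI n).2.
have NN_ge : forall n, (n <= sN (S n))%N.
  by elim=> [|n IH] //; apply: leq_ltn_trans IH (Nlt n).
have N_mono : forall t s, (t <= s)%N -> (sN (S t) <= sN (S s))%N.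
  move=> t; elim=> [|s IH]; first by rewrite leqn0 => /eqP ->.
  rewrite leq_eqVlt ltnS => /orP [/eqP ->//|ts].
  by apply: leq_trans (IH ts) (ltnW (Nlt s)).
have E_stab : forall t s, (t <= s)%N -> forall j, (j < sN (S t))%N ->
    sE (S s) j = sE (S t) j.
  move=> t; elim=> [|s IH]; first by rewrite leqn0 => /eqP ->.
  rewrite leq_eqVlt ltnS => /orP [/eqP ->//|ts] j jt.
  have [_ hE _ _ _] := (HI s).2.
  rewrite hE ?IH //; apply: leq_trans jt (N_mono _ _ ts).
have rpos : forall n, 0 < sr (S n) by move=> n; have [_ h _] := (HI n).1.
have nest : forall t s, (t <= s)%N -> forall w,
    ball (sy (S s)) (sr (S s)) w -> ball (sy (S t)) (sr (S t)) w.
  move=> t; elim=> [|s IH]; first by rewrite leqn0 => /eqP ->.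
  rewrite leq_eqVlt ltnS => /orP [/eqP ->//|ts] w hw.
  have [_ _ _ hb _] := (HI s).2.
  apply: IH => //; apply: hb; apply: le_ball hw.
  by have := rpos s.+1; lra.
pose u := fun n => sy (S n).
have Cy : cauchy_ex (u @ \oo).
  move=> e e0; have [t ht] := rad_small e0.
  exists (u t.+1); apply: filterS (nbhs_infty_ge t.+1) => s ts.
  have := nest _ _ ts _ (ballxx (sy (S s)) (rpos s)).
  apply: le_ball; have [_ _ hr _ _] := (HI t).2.
  exact: le_trans hr (ltW ht).
have cF : cvg (u @ \oo) by apply: cauchy_cvg; apply: cauchy_exP.
pose xs := lim (u @ \oo).
have inball : forall t, ball (u t) (sr (S t)) xs.
  move=> t; have r1 := rpos t.+1.
  have H : \forall s \near \oo, ball xs (sr (S t.+1)) (u s).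
    exact: cF _ (nbhsx_ballx _ _ r1).
  have [s [h1 h2]] := filter_ex (filterI H (nbhs_infty_ge t.+1)).
  have h3 := nest _ _ h2 _ (ballxx (sy (S s)) (rpos s)).
  have [_ _ _ hb _] := (HI t).2; apply: hb.
  exact: ball_triangle h3 (ball_sym h1).
pose Einf := fun j => sE (S j.+1) j.
have AEx : AE a Einf xs.
  move=> j [r r0 hr]; have bl := hr xs (ballxx xs r0).
  have [_ _ hI] := (HI j.+1).1.
  exact: (hI j (NN_ge j.+1) xs (inball j.+1) bl).
have [s [hl hs]] := Fok _ _ (qE_name a Einf).
have [n sn] := hs.1 (ex_intro _ xs AEx).
have [i0 hi0] := hl n.
pose t := maxn n i0.
have [_ _ _ _ hz] := (HI t).2.
have agree : forall j, (j < sN (S t.+1))%N -> Einf j = sE (S t.+1) j.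
  move=> j jlt; rewrite /Einf.
  rewrite -(E_stab _ _ (leq_maxl j.+1 t.+1) j (NN_ge j.+1)).
  exact: (E_stab _ _ (leq_maxr j.+1 t.+1) j jlt).
have [i [ti Fi]] := hz Einf agree n (leq_maxl n i0).
exfalso; apply: sn; rewrite -(hi0 i) ?Fi //.
exact: leq_trans (leq_maxr n i0) ti.
Qed.
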